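(* Let $k\ge1$, $m=2k$, and let $R_m^+(\hat K)=P_m(\hat K)+\mathrm{span}\{\hat x^m\hat y,\ \hat x\hat y^m\}$. Let $g_{\pm1},\dots,g_{\pm k}$ be the $2k$ zeros of the Legendre polynomial of degree $2k$ on $[-1,1]$, indexed so that $0<g_1<\dots<g_k$ and $g_{-i}=-g_i$. Then every $\hat v\in R_m^+(\hat K)$ satisfies $$\sum_{\substack{i=-k\\ i\ne 0}}^{k}\frac{\hat v(1,g_i)-\hat v(-1,g_i)-\hat v(g_i,1)+\hat v(g_i,-1)}{g_i(1-g_i^2)\prod_{\substack{j=1\\ j\ne |i|}}^{k}(g_i^2-g_j^2)}=0.$$
   Context: $\hat K=[-1,1]^2$ with coordinates $(\hat x,\hat y)$; $P_m(\hat K)$ is the space of polynomials of total degree $\le m$. Empty products equal $1$. *)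

(* Defs.v *)
From HB Require Import structures.
From mathcomp Require Import all_boot all_order all_algebra.
Set Implicit Arguments. Unset Strict Implicit. Unset Printing Implicit Defensive.
Import Order.TTheory GRing.Theory Num.Theory.
Local Open Scope ring_scope.

(* Legendre polynomial of degree n, Rodrigues' formula:
   P_n = 1/(2^n n!) d^n/dx^n (x^2 - 1)^n. *)
Definition legendre (R : realFieldType) (n : nat) : {poly R} :=
  ((2 ^+ n * (n`!)%:R)^-1) *: ((('X ^+ 2 - 1) ^+ n) ^`(n)).

Definition mono2 (R : realFieldType) (i j : nat) (x y : R) : R := x ^+ i * y ^+ j.

Definition in_Rplus (R : realFieldType) (m : nat) (v : R -> R -> R) : Prop :=
  exists (c : 'I_m.+1 -> 'I_m.+1 -> R) (a b : R),
    forall x y : R,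
      v x y = \sum_(i < m.+1) \sum_(j < m.+1 | (i + j <= m)%N) c i j * mono2 i j x y
              + a * mono2 m 1 x y + b * mono2 1 m x y.

(* Main.v *)
Require Import Defs.
From HB Require Import structures.
From mathcomp Require Import all_boot all_order all_algebra.
From mathcomp Require Import ring lra zify.
Import Order.TTheory GRing.Theory Num.Theory.
Local Open Scope ring_scope.
Lemma lagr_sum (R : realFieldType) (k : nat) (u : 'I_k -> R) (f : {poly R}) :
  injective u -> (size f < k)%N ->
  \sum_(l < k) f.[u l] / \prod_(j < k | j != l) (u l - u j) = 0.
Proof.
move=> uinj szf.
pose lag (i : 'I_k) := \prod_(j < k | j != i) ('X - (u j)%:P).
have dE i : (lag i).[u i] = \prod_(j < k | j != i) (u i - u j).
  by rewrite /lag horner_prod; apply: eq_bigr => j _; rewrite hornerXsubC.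
have d0 i : \prod_(j < k | j != i) (u i - u j) != 0.
  by apply/prodf_neq0 => j ji; rewrite subr_eq0 (inj_eq uinj) eq_sym.
have lagj i j : j != i -> (lag i).[u j] = 0.
  by move=> ji; rewrite /lag horner_prod (bigD1 j) //= hornerXsubC subrr mul0r.
have szlag i : size (lag i) = k.
  rewrite /lag size_prod /=; last by move=> j _; rewrite polyXsubC_eq0.
  rewrite (eq_bigr (fun=> (2 * 1)%N)); last by move=> j _; rewrite size_XsubC.
  rewrite -big_distrr /= sum1_card cardC1 card_ord /=.
  by case: (k) i => [[]//|n _]; rewrite mul2n -addnn -addSn addnK.
pose L := \sum_(i < k) (f.[u i] / \prod_(j < k | j != i) (u i - u j)) *: lag i.
have szL : (size L <= k)%N.
  rewrite /L; elim/big_ind: _ => //[|p q hp hq|i _]; first by rewrite size_poly0.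
    by rewrite (leq_trans (size_polyD _ _)) // geq_max hp hq.
  by rewrite (leq_trans (size_scale_leq _ _)) // szlag.
have LE : L = f.
  apply/eqP; rewrite -subr_eq0; apply/negPn/negP => nz.
  have := max_poly_roots nz (rs := map u (enum 'I_k)).
  rewrite size_map size_enum_ord map_inj_uniq ?enum_uniq //.
  have -> : all (root (L - f)) (map u (enum 'I_k)).
    apply/allP => x /mapP [l _ ->]; rewrite /root hornerD hornerN /L horner_sum.
    rewrite [\sum_i _](bigD1 l) //=.
    rewrite [X in _ + X - _]big1; last first.
      by move=> i il; rewrite !hornerE lagj ?mulr0 // eq_sym.
    by rewrite !hornerE dE divfK // subrr.
  move=> /(_ isT isT) H; suff: (size (L - f)%R <= k)%N by rewrite leqNgt H.
  by apply: (leq_trans (size_polyD _ _)); rewrite size_polyN geq_max szL ltnW.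
have : L`_k.-1 = f`_k.-1 by rewrite LE.
have k0 : (0 < k)%N by apply: leq_ltn_trans (leq0n _) szf.
rewrite [f`_ _]nth_default; last by rewrite -ltnS prednK.
rewrite /L coef_sum => H; rewrite -[RHS]H; apply: eq_bigr => i _.
rewrite coefZ; have := monic_prod_XsubC (index_enum 'I_k) (fun j => j != i) u.
by rewrite -/(lag i) => /monicP; rewrite /lead_coef szlag => ->; rewrite mulr1.
Qed.
Lemma dershift (R : realFieldType) n (q : {poly R}) j : (j <= n)%N ->
  exists r, (('X - 1) ^+ n * q)^`(j) = ('X - 1) ^+ (n - j) * (q *+ (n ^_ j) + ('X - 1) * r).
Proof.
elim: j => [_|j IH jn].
  by exists 0; rewrite derivn0 subn0 ffactn0 mulr0 addr0 mulr1n.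
have [r Hr] := IH (ltnW jn).
have ee : (n - j = (n - j.+1).+1)%N by rewrite subnSK.
set e := (n - j.+1)%N in ee *.
set w := q *+ n ^_ j + ('X - 1) * r.
exists (r *+ e.+1 + w^`()).
rewrite derivnS Hr derivM deriv_exp derivB derivX derivC subr0 ffactnSr ee /=.
rewrite mulnC mulrnA exprS.
rewrite /w; ring.
Qed.

Lemma legendre1 (R : realFieldType) n : (legendre R n).[1] = 1.
Proof.
have [r Hr] := @dershift R n (('X + 1) ^+ n) n (leqnn n).
rewrite /legendre hornerZ.
have -> : ('X ^+ 2 - 1 : {poly R}) ^+ n = ('X - 1) ^+ n * ('X + 1) ^+ n.
  by rewrite -exprMn; congr (_ ^+ _); ring.
rewrite Hr subnn expr0 mul1r ffactnn !hornerE /= subrr mul0r addr0.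
rewrite hornerMn horner_exp !hornerE -mulr_natr.
have h2 : (2%:R : R) ^+ n != 0 by rewrite expf_neq0 // pnatr_eq0.
have hf : (n`!%:R : R) != 0 by rewrite pnatr_eq0 -lt0n fact_gt0.
have -> : (1 + 1 : R) = 2%:R by [].
by rewrite mul1r -[2 ^+ n *+ _]mulr_natr mulVf // mulf_neq0.
Qed.
Definition Phi {R : realFieldType} (g : R) (w : R -> R -> R) : R :=
  w 1 g - w (-1) g - w g 1 + w g (-1)
  - (w 1 (-g) - w (-1) (-g) - w (-g) 1 + w (-g) (-1)).

Definition Zs {R : realFieldType} {k} (g den : 'I_k -> R) (w : R -> R -> R) : R :=
  \sum_(l < k) Phi (g l) w / den l.

Lemma Zs_ext {R : realFieldType} {k} {g den : 'I_k -> R} {w : R -> R -> R} (w' : R -> R -> R) :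
  (forall x y, w x y = w' x y) -> Zs g den w = Zs g den w'.
Proof. by move=> H; rewrite /Zs /Phi; apply: eq_bigr => l _; rewrite !H. Qed.

Lemma Zs_add (R : realFieldType) k (g den : 'I_k -> R) (w1 w2 : R -> R -> R) :
  Zs g den (fun x y => w1 x y + w2 x y) = Zs g den w1 + Zs g den w2.
Proof. by rewrite /Zs -big_split; apply: eq_bigr => l _; rewrite /Phi /=; ring. Qed.

Lemma Zs_scale (R : realFieldType) k (g den : 'I_k -> R) c (w : R -> R -> R) :
  Zs g den (fun x y => c * w x y) = c * Zs g den w.
Proof. by rewrite /Zs mulr_sumr; apply: eq_bigr => l _; rewrite /Phi /=; ring. Qed.

Lemma Zs_zero (R : realFieldType) k (g den : 'I_k -> R) :
  Zs g den (fun _ _ => 0) = 0.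
Proof. by rewrite /Zs big1 // => l _; rewrite /Phi /=; rewrite (_ : 0 - 0 - 0 + 0 - (0 - 0 - 0 + 0) = 0 :> R) ?mul0r //; ring. Qed.

Lemma Zs_sum (R : realFieldType) k (g den : 'I_k -> R) (I : Type) (r : seq I)
  (P : pred I) (F : I -> R -> R -> R) :
  Zs g den (fun x y => \sum_(i <- r | P i) F i x y) = \sum_(i <- r | P i) Zs g den (F i).
Proof.
elim: r => [|a r IH].
  by rewrite big_nil (Zs_ext (fun _ _ => 0)) ?Zs_zero // => x y; rewrite big_nil.
rewrite big_cons; case Pa: (P a).
  rewrite (Zs_ext (fun x y => F a x y + \sum_(i <- r | P i) F i x y)).
    by rewrite Zs_add IH.
  by move=> x y; rewrite big_cons Pa.
rewrite (Zs_ext (fun x y => \sum_(i <- r | P i) F i x y)) ?IH //.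
by move=> x y; rewrite big_cons Pa.
Qed.

Lemma Phi_mono (R : realFieldType) (g : R) i j :
  Phi g (mono2 i j) = if odd i && odd j then 4 * (g ^+ j - g ^+ i) else 0.
Proof.
rewrite /Phi /mono2 !expr1n !(exprNn g) -(signr_odd _ i) -(signr_odd _ j).
by case: (odd i); case: (odd j) => /=; ring.
Qed.

Lemma term_alg (R : realFieldType) (g P : R) p q : g != 0 -> g ^+ 2 != 1 -> P != 0 ->
  4 * (g ^+ q.*2.+1 - g ^+ p.*2.+1) / (g * (1 - g ^+ 2) * P) =
  4 * (\sum_(t < p) (g ^+ 2) ^+ t / P - \sum_(t < q) (g ^+ 2) ^+ t / P).
Proof.
move=> g0 g1 P0.
rewrite -!mulr_suml.
have eS n : g ^+ n.*2.+1 = g * (g ^+ 2) ^+ n by rewrite exprS -mul2n exprM.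
rewrite !eS.
have hq := subrX1 (g ^+ 2) q; have hp := subrX1 (g ^+ 2) p.
set u := g ^+ 2 in g1 hq hp *.
set Sq := \sum_(i < q) u ^+ i in hq *; set Sp := \sum_(i < p) u ^+ i in hp *.
rewrite (_ : u ^+ q = (u - 1) * Sq + 1); last by rewrite -hq subrK.
rewrite (_ : u ^+ p = (u - 1) * Sp + 1); last by rewrite -hp subrK.
have u1 : 1 - u != 0 by rewrite subr_eq0 eq_sym.
field.
by rewrite g0 u1 P0.
Qed.

Lemma Zs_mono (R : realFieldType) k (g : 'I_k -> R) i j :
  (forall l, g l != 0) -> (forall l, g l ^+ 2 != 1) -> injective (fun l => g l ^+ 2) ->
  (odd i && odd j -> (i + j <= 2 * k)%N) ->
  Zs g (fun l => g l * (1 - g l ^+ 2) * \prod_(j < k | j != l) (g l ^+ 2 - g j ^+ 2))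
     (mono2 i j) = 0.
Proof.
move=> g0 g1 uinj hij; rewrite /Zs.
under eq_bigr do rewrite Phi_mono.
case oij: (odd i && odd j); last by rewrite big1 // => l _; rewrite mul0r.
have {}hij := hij oij.
move/andP: oij => [oi oj].
have ei := odd_double_half i; have ej := odd_double_half j.
rewrite oi in ei; rewrite oj in ej.
set p := i./2 in ei; set q := j./2 in ej.
have pq : (p + q < k)%N.
  move: hij; rewrite -ei -ej -!mul2n /=; lia.
have P0 l : \prod_(j0 < k | j0 != l) (g l ^+ 2 - g j0 ^+ 2) != 0.
  by apply/prodf_neq0 => j0 jl; rewrite subr_eq0 (inj_eq uinj) eq_sym.
have -> : i = p.*2.+1 by rewrite -ei.
have -> : j = q.*2.+1 by rewrite -ej.
under eq_bigr do rewrite term_alg //.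
have Lg t : (t.+2 <= k)%N ->
    \sum_(l < k) (g l ^+ 2) ^+ t / \prod_(j0 < k | j0 != l) (g l ^+ 2 - g j0 ^+ 2) = 0.
  move=> ht; have := @lagr_sum R k (fun l => g l ^+ 2) 'X^t uinj; rewrite size_polyXn => /(_ ht) H; rewrite -[RHS]H.
  by apply: eq_bigr => l _; rewrite hornerXn.
rewrite -mulr_sumr sumrB exchange_big [X in _ - X]exchange_big /=.
by rewrite !big1 ?subrr ?mulr0 // => t _; apply: Lg; have := ltn_ord t; lia.
Qed.

Theorem mainTheorem5 (R : realFieldType) (k : nat) (hk : (0 < k)%N)
  (g : 'I_k -> R)
  (g_pos : forall i, 0 < g i)
  (g_incr : forall i j : 'I_k, (i < j)%N -> g i < g j)
  (g_root : forall i, root (legendre R (2 * k)) (g i))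
  (v : R -> R -> R) (hv : in_Rplus (2 * k) v) :
  \sum_(i < k) \sum_(s <- [:: 1; -1])
     (let x := s * g i in
      (v 1 x - v (-1) x - v x 1 + v x (-1)) /
      (x * (1 - x ^+ 2) * \prod_(j < k | j != i) (x ^+ 2 - g j ^+ 2))) = 0.
Proof.
have g0 l : g l != 0 by rewrite gt_eqF.
have g1 l : g l ^+ 2 != 1.
  rewrite sqrp_eq1 ?ltW //; apply/eqP => e; have := g_root l.
  by rewrite e /root legendre1 oner_eq0.
have uinj : injective (fun l => g l ^+ 2).
  move=> a b /eqP; rewrite eqrXn2 ?ltW // => /eqP e.
  case: (ltngtP a b) => [ab|ba|/val_inj //]; [have := g_incr _ _ ab | have := g_incr _ _ ba];
    by rewrite e ltxx.
pose den l := g l * (1 - g l ^+ 2) * \prod_(j < k | j != l) (g l ^+ 2 - g j ^+ 2).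
rewrite (eq_bigr (fun l => Phi (g l) v / den l)); last first.
  move=> l _; rewrite !big_cons big_nil /= mul1r mulN1r sqrrN /den /Phi.
  rewrite !mulNr invrN; ring.
change (Zs g den v = 0).
have [c [a [b hv']]] := hv.
rewrite (Zs_ext _ hv') !Zs_add !Zs_scale !Zs_mono //; try by rewrite oddM /= ?andbF.
rewrite !mulr0 !addr0 Zs_sum big1 // => i _.
rewrite Zs_sum big1 // => j hij.
by rewrite Zs_scale Zs_mono ?mulr0 // => _.
Qed.
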